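(* Let $D$ be an $n\times n$ diagonal matrix with positive integer diagonal entries and let $O\in\mathrm U(n)$. Then $$\min_{\substack{V\in\mathrm U(n)\\ [V,D]=0}}\|O-V\|\le 2n\,\|[O,D]\|.$$
   Context: $[X,Y]=XY-YX$; $\|\cdot\|$ denotes the operator norm. *)

(* Defs.v *)
From HB Require Import structures.
From mathcomp Require Import all_boot all_order all_algebra.
From mathcomp Require Import complex.
From mathcomp Require Import classical_sets reals.
Set Implicit Arguments. Unset Strict Implicit. Unset Printing Implicit Defensive.
Import Order.TTheory GRing.Theory Num.Theory.
Local Open Scope ring_scope.
Local Open Scope classical_set_scope.

Definition cabs2 {R : realType} (z : R[i]) : R := (complex.Re z) ^+ 2 + (complex.Im z) ^+ 2.

Definition vnorm {R : realType} {n : nat} (x : 'cV[R[i]]_n) : R :=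
  Num.sqrt (\sum_(k < n) cabs2 (x k 0)).

Definition opnorm {R : realType} {n : nat} (A : 'M[R[i]]_n) : R :=
  sup [set vnorm (A *m x) | x in [set x : 'cV[R[i]]_n | vnorm x = 1]].

Definition adjmx {R : realType} {n : nat} (A : 'M[R[i]]_n) : 'M[R[i]]_n :=
  (map_mx (@conjc R) A)^T.

Definition unitary {R : realType} {n : nat} (U : 'M[R[i]]_n) : Prop :=
  U *m adjmx U = 1%:M /\ adjmx U *m U = 1%:M.

Definition commutator {R : realType} {n : nat} (X Y : 'M[R[i]]_n) : 'M[R[i]]_n :=
  X *m Y - Y *m X.

Definition natdiag {R : realType} {n : nat} (d : 'I_n -> nat) : 'M[R[i]]_n :=
  diag_mx (\row_(k < n) ((d k)%:R : R[i])).

(* Main.v *)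
Require Import Defs.
From HB Require Import structures.
From mathcomp Require Import all_boot all_order all_algebra.
From mathcomp Require Import complex.
From mathcomp Require Import classical_sets reals.
From mathcomp Require Import spectral sesquilinear.
From mathcomp Require Import ring lra boolp.
Import Order.TTheory GRing.Theory Num.Theory.
Local Open Scope ring_scope.
Local Open Scope complex_scope.

Definition sqv {R : realType} {n : nat} (x : 'cV[R[i]]_n) : R :=
  \sum_(k < n) cabs2 (x k 0).

Lemma cabs2_ge0 {R : realType} (z : R[i]) : 0 <= cabs2 z.
Proof. by rewrite /cabs2 addr_ge0 // sqr_ge0. Qed.

Lemma sqv_ge0 {R : realType} {n : nat} (x : 'cV[R[i]]_n) : 0 <= sqv x.
Proof. by apply: sumr_ge0 => k _; apply: cabs2_ge0. Qed.

Lemma vnormE {R : realType} {n : nat} (x : 'cV[R[i]]_n) : vnorm x = Num.sqrt (sqv x).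
Proof. by []. Qed.

Lemma vnorm_ge0 {R : realType} {n : nat} (x : 'cV[R[i]]_n) : 0 <= vnorm x.
Proof. exact: sqrtr_ge0. Qed.

Lemma vnorm_sq {R : realType} {n : nat} (x : 'cV[R[i]]_n) : vnorm x ^+ 2 = sqv x.
Proof. by rewrite vnormE sqr_sqrtr // sqv_ge0. Qed.

Lemma cabs2M {R : realType} (a z : R[i]) : cabs2 (a * z) = cabs2 a * cabs2 z.
Proof. by case: a => a1 a2; case: z => z1 z2; rewrite /cabs2 /=; ring. Qed.

Lemma cabs2N {R : realType} (z : R[i]) : cabs2 (- z) = cabs2 z.
Proof. by case: z => z1 z2; rewrite /cabs2 /=; ring. Qed.

Lemma cabs2R {R : realType} (r : R) : cabs2 (r%:C) = r ^+ 2.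
Proof. by rewrite /cabs2 /=; ring. Qed.

Definition rdot {R : realType} {n : nat} (x y : 'cV[R[i]]_n) : R :=
  \sum_(k < n) (complex.Re (x k 0) * complex.Re (y k 0) + complex.Im (x k 0) * complex.Im (y k 0)).

Lemma sqv_lin {R : realType} {n : nat} (x y : 'cV[R[i]]_n) (t : R) :
  sqv (x + t%:C *: y) = sqv x + 2 * t * rdot x y + t ^+ 2 * sqv y.
Proof.
rewrite /sqv /rdot mulr_sumr mulr_sumr -!big_split /=; apply: eq_bigr => k _.
rewrite !mxE; case: (x k 0) => a b; case: (y k 0) => c e; rewrite /cabs2 /=; ring.
Qed.

Lemma discr {R : realType} (A B C : R) : 0 <= C ->
  (forall t, 0 <= A + 2 * t * B + t ^+ 2 * C) -> B ^+ 2 <= A * C.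
Proof.
move=> C0 H; have [Cz|Cp] := eqVneq C 0.
  have HA := H 0; rewrite Cz; have [Bz|Bn] := eqVneq B 0.
    by rewrite Bz; lra.
  have := H (- (A + 1) / (2 * B)); rewrite Cz mulr0 addr0.
  have -> : 2 * (- (A + 1) / (2 * B)) * B = - (A + 1) by field.
  lra.
have Cp' : 0 < C by rewrite lt_def Cp C0.
have := H (- B / C).
have -> : A + 2 * (- B / C) * B + (- B / C) ^+ 2 * C = (A * C - B ^+ 2) / C.
  by field.
by rewrite pmulr_lge0 ?invr_gt0 // subr_ge0.
Qed.

Lemma rdot_le {R : realType} {n : nat} (x y : 'cV[R[i]]_n) :
  rdot x y <= vnorm x * vnorm y.
Proof.
have h : rdot x y ^+ 2 <= sqv x * sqv y.
  apply: discr; first exact: sqv_ge0.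
  by move=> t; rewrite -sqv_lin sqv_ge0.
have h3 : Num.sqrt (sqv x * sqv y) = vnorm x * vnorm y by rewrite sqrtrM ?sqv_ge0.
have := ler_wsqrtr h; rewrite h3 sqrtr_sqr => h2.
apply: le_trans h2; exact: real_ler_norm (num_real _).
Qed.

Lemma vnorm_add {R : realType} {n : nat} (x y : 'cV[R[i]]_n) :
  vnorm (x + y) <= vnorm x + vnorm y.
Proof.
rewrite -(ler_pXn2r (_ : (0 < 2)%N)) ?nnegrE ?addr_ge0 ?vnorm_ge0 //.
rewrite vnorm_sq; have := sqv_lin x y 1; rewrite scale1r => ->.
rewrite -!vnorm_sq; have := rdot_le x y.
set a := vnorm x; set b := vnorm y; set r := rdot x y; nra.
Qed.

Lemma vnorm_scale {R : realType} {n : nat} (a : R[i]) (x : 'cV[R[i]]_n) :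
  vnorm (a *: x) = Num.sqrt (cabs2 a) * vnorm x.
Proof.
rewrite !vnormE -sqrtrM ?cabs2_ge0 //; congr Num.sqrt.
rewrite /sqv mulr_sumr; apply: eq_bigr => k _; by rewrite mxE cabs2M.
Qed.

Lemma vnormN {R : realType} {n : nat} (x : 'cV[R[i]]_n) : vnorm (- x) = vnorm x.
Proof.
rewrite !vnormE /sqv; congr Num.sqrt; apply: eq_bigr => k _; by rewrite mxE cabs2N.
Qed.

Lemma vnorm_sub {R : realType} {n : nat} (x y : 'cV[R[i]]_n) :
  vnorm (x - y) <= vnorm x + vnorm y.
Proof. by rewrite -(vnormN y) vnorm_add. Qed.

Lemma vnorm_sum {R : realType} {n : nat} (I : finType) (F : I -> 'cV[R[i]]_n) :
  vnorm (\sum_i F i) <= \sum_i vnorm (F i).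
Proof.
elim/big_rec2: _ => [|i y1 y2 _ h].
  by rewrite vnormE /sqv big1 ?sqrtr0 // => k _; rewrite mxE /cabs2 /=; ring.
exact: le_trans (vnorm_add _ _) (lerD (lexx _) h).
Qed.

Lemma coord_le {R : realType} {n : nat} (x : 'cV[R[i]]_n) (j : 'I_n) :
  Num.sqrt (cabs2 (x j 0)) <= vnorm x.
Proof.
rewrite vnormE ler_wsqrtr // /sqv (bigD1 j) //= lerDl.
by apply: sumr_ge0 => k _; apply: cabs2_ge0.
Qed.

Lemma mul_col_sum {R : realType} {n : nat} (A : 'M[R[i]]_n) (x : 'cV[R[i]]_n) :
  A *m x = \sum_j x j 0 *: col j A.
Proof.
apply/matrixP => i k; rewrite !mxE summxE; apply: eq_bigr => j _.
by rewrite !mxE (ord1 k) mulrC.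
Qed.

Lemma vnorm_mul_le {R : realType} {n : nat} (A : 'M[R[i]]_n) (x : 'cV[R[i]]_n) :
  vnorm (A *m x) <= \sum_j Num.sqrt (cabs2 (x j 0)) * vnorm (col j A).
Proof.
rewrite mul_col_sum; have h := vnorm_sum _ (fun j => x j 0 *: col j A).
apply: (le_trans h).
by apply: ler_sum => j _; rewrite vnorm_scale.
Qed.

Lemma opnorm_le {R : realType} {n : nat} (A : 'M[R[i]]_n) (K : R) : 0 <= K ->
  (forall x, vnorm (A *m x) <= K * vnorm x) -> opnorm A <= K.
Proof.
move=> K0 hA; rewrite /opnorm.
set E := (X in sup X).
have [ne|ne] := pselect (E !=set0)%classic.
  apply: ge_sup => // _ [x /= hx <-]; by rewrite -[K]mulr1 -hx hA.
have -> : E = set0.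
  by apply/seteqP; split => z Ez //; exfalso; apply: ne; exists z.
by rewrite sup0.
Qed.

Lemma opnorm_ge {R : realType} {n : nat} (A : 'M[R[i]]_n) (x : 'cV[R[i]]_n) :
  vnorm x = 1 -> vnorm (A *m x) <= opnorm A.
Proof.
move=> hx; rewrite /opnorm; apply: sup_upper_bound; last by exists x.
split; first by exists (vnorm (A *m x)), x.
exists (\sum_j vnorm (col j A)) => _ [y /= hy <-].
apply: (le_trans (vnorm_mul_le _ _)); apply: ler_sum => j _.
rewrite -[X in _ <= X]mul1r ler_wpM2r ?vnorm_ge0 //.
by rewrite -hy coord_le.
Qed.

Definition ct {R : realType} {m p : nat} (A : 'M[R[i]]_(m, p)) : 'M[R[i]]_(p, m) :=
  (map_mx (@conjc R) A)^T.

Lemma adjmx_ct {R : realType} {n : nat} (A : 'M[R[i]]_n) : adjmx A = ct A.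
Proof. by []. Qed.

Lemma ct_mul {R : realType} {m p q : nat} (A : 'M[R[i]]_(m, p)) (B : 'M[R[i]]_(p, q)) :
  ct (A *m B) = ct B *m ct A.
Proof. by rewrite /ct map_mxM trmx_mul. Qed.

Lemma ctK {R : realType} {m p : nat} (A : 'M[R[i]]_(m, p)) : ct (ct A) = A.
Proof.
apply/matrixP => i j; rewrite !mxE; exact: conjcK.
Qed.

Lemma ct1 {R : realType} {n : nat} : ct (1%:M : 'M[R[i]]_n) = 1%:M.
Proof. by rewrite /ct map_mx1 trmx1. Qed.

Lemma ct_add {R : realType} {m p : nat} (A B : 'M[R[i]]_(m, p)) : ct (A + B) = ct A + ct B.
Proof. by apply/matrixP => i j; rewrite !mxE rmorphD. Qed.

Lemma ct_opp {R : realType} {m p : nat} (A : 'M[R[i]]_(m, p)) : ct (- A) = - ct A.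
Proof. by apply/matrixP => i j; rewrite !mxE rmorphN. Qed.

Lemma star_ct {R : realType} {n : nat} (A : 'M[R[i]]_n) :
  (A ^t (@Num.conj_op R[i]))%sesqui = ct A.
Proof. by rewrite /ct map_trmx. Qed.

Lemma conjc_mul_self {R : realType} (z : R[i]) : conjc z * z = (cabs2 z)%:C.
Proof. by case: z => a b; rewrite /cabs2 /=; congr Complex; ring. Qed.

Lemma sqv_ctE {R : realType} {n : nat} (x : 'cV[R[i]]_n) :
  (ct x *m x) 0 0 = (sqv x)%:C.
Proof.
rewrite !mxE /sqv rmorph_sum; apply: eq_bigr => k _.
by rewrite !mxE conjc_mul_self.
Qed.

Lemma vnorm_iso {R : realType} {n : nat} (U : 'M[R[i]]_n) (x : 'cV[R[i]]_n) :
  ct U *m U = 1%:M -> vnorm (U *m x) = vnorm x.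
Proof.
move=> hU; rewrite !vnormE; congr Num.sqrt; apply: complexI.
by rewrite -!sqv_ctE ct_mul mulmxA -(mulmxA (ct x)) hU mulmx1.
Qed.

Lemma comm_block {R : realType} {n : nat} (d : 'I_n -> nat) (M : 'M[R[i]]_n) :
  (forall i j, d i != d j -> M i j = 0) -> M *m natdiag d = natdiag d *m M.
Proof.
move=> hM; apply/matrixP => i j; rewrite /natdiag mul_mx_diag mul_diag_mx !mxE.
have [e|ne] := eqVneq (d i) (d j); first by rewrite e mulrC.
by rewrite hM // mulr0 mul0r.
Qed.

Lemma nat_sep {R : realType} (a b : nat) : a != b -> 1 <= (a%:R - b%:R : R) ^+ 2.
Proof.
move=> ne; case: (ltngtP a b) => h; last by rewrite h eqxx in ne.
  have : (a.+1%:R <= b%:R :> R) by rewrite ler_nat.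
  rewrite -natr1; set u := a%:R; set v := b%:R; nra.
have : (b.+1%:R <= a%:R :> R) by rewrite ler_nat.
rewrite -natr1; set u := a%:R; set v := b%:R; nra.
Qed.

Lemma cabs2_sep {R : realType} (a b : nat) (z : R[i]) : a != b ->
  cabs2 z <= cabs2 (z * a%:R - b%:R * z).
Proof.
move=> ne; have -> : z * a%:R - b%:R * z = z * ((a%:R - b%:R : R)%:C).
  by rewrite rmorphB !rmorph_nat; ring.
rewrite cabs2M cabs2R -[X in X <= _]mulr1 ler_wpM2l ?cabs2_ge0 //.
exact: nat_sep.
Qed.

Definition dR {R : realType} {n : nat} (f : 'I_n -> R) : 'M[R[i]]_n :=
  diag_mx (\row_i (f i)%:C).

Lemma gram {R : realType} {n : nat} (Y : 'M[R[i]]_n) (i : 'I_n) :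
  (ct Y *m Y) i i = (vnorm (col i Y) ^+ 2)%:C.
Proof.
rewrite vnorm_sq !mxE /sqv rmorph_sum; apply: eq_bigr => k _.
by rewrite !mxE conjc_mul_self.
Qed.

Lemma ct_dR {R : realType} {n : nat} (f : 'I_n -> R) : ct (dR f) = dR f.
Proof.
apply/matrixP => i j; rewrite !mxE; case: (eqVneq i j) => [->|ne].
  by rewrite !mulr1n conjc_real.
by rewrite !mulr0n conjc0.
Qed.

Lemma dR_mul {R : realType} {n : nat} (f g : 'I_n -> R) :
  dR f *m dR g = dR (fun i => f i * g i).
Proof.
by rewrite /dR mulmx_diag; congr diag_mx; apply/rowP => i; rewrite !mxE rmorphM.
Qed.

Lemma dR1 {R : realType} {n : nat} (f : 'I_n -> R) : (forall i, f i = 1) -> dR f = 1%:M.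
Proof.
move=> h; apply/matrixP => i j; rewrite !mxE h.
by case: (eqVneq i j).
Qed.

Lemma dR_sub1 {R : realType} {n : nat} (f : 'I_n -> R) : dR f - 1%:M = dR (fun i => f i - 1).
Proof.
apply/matrixP => i j; rewrite !mxE rmorphB; case: (eqVneq i j) => [->|ne] /=.
  by rewrite !mulr1n.
by rewrite !mulr0n subr0.
Qed.

Lemma dR_entry {R : realType} {n : nat} (f : 'I_n -> R) (G : 'M[R[i]]_n) i j :
  (dR f *m G) i j = (f i)%:C * G i j /\ (G *m dR f) i j = G i j * (f j)%:C.
Proof. by rewrite /dR mul_diag_mx mul_mx_diag !mxE. Qed.

Lemma dR_bound {R : realType} {n : nat} (f : 'I_n -> R) (e : R) (z : 'cV[R[i]]_n) :
  0 <= e -> (forall i, f i ^+ 2 <= e ^+ 2) -> vnorm (dR f *m z) <= e * vnorm z.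
Proof.
move=> e0 hf; rewrite !vnormE -[e](ger0_norm e0) -sqrtr_sqr -sqrtrM ?sqr_ge0 //.
apply: ler_wsqrtr; rewrite /sqv mulr_sumr; apply: ler_sum => k _.
by rewrite /dR mul_diag_mx !mxE cabs2M cabs2R ler_wpM2r ?cabs2_ge0 //.
Qed.

Lemma conjmul {R : realType} {n : nat} (U A B : 'M[R[i]]_n) : U *m ct U = 1%:M ->
  (ct U *m A *m U) *m (ct U *m B *m U) = ct U *m (A *m B) *m U.
Proof.
move=> hU; rewrite !mulmxA -(mulmxA (ct U *m A) U (ct U)) hU mulmx1.
by rewrite ?mulmxA.
Qed.

Lemma polar_case {R : realType} {n : nat} (d : 'I_n -> nat) (O P : 'M[R[i]]_n) (eps : R) :
  ct O *m O = 1%:M -> 0 <= eps -> eps < 1 ->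
  (forall x, vnorm ((O - P) *m x) <= eps * vnorm x) ->
  (forall i j, d i != d j -> P i j = 0) ->
  exists V : 'M[R[i]]_n, [/\ ct V *m V = 1%:M, V *m natdiag d = natdiag d *m V &
     forall x, vnorm ((P - V) *m x) <= eps * vnorm x].
Proof.
move=> hO e0 e1 hB hPb.
have hPlo : forall x, (1 - eps) * vnorm x <= vnorm (P *m x).
  move=> x; have : vnorm x <= vnorm (P *m x) + eps * vnorm x.
    rewrite -{1}(vnorm_iso _ x hO).
    have -> : O *m x = P *m x + (O - P) *m x by rewrite mulmxBl addrC subrK.
    by apply: (le_trans (vnorm_add _ _)); rewrite lerD2l hB.
  lra.
have hPhi : forall x, vnorm (P *m x) <= (1 + eps) * vnorm x.
  move=> x; have -> : P *m x = O *m x - (O - P) *m x by rewrite mulmxBl opprB addrC subrK.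
  apply: (le_trans (vnorm_sub _ _)); rewrite vnorm_iso //.
  have := hB x; lra.
set H := ct P *m P.
have ctH : ct H = H by rewrite /H ct_mul ctK.
have Hn : H \is normalmx by rewrite qualifE !star_ct ctH.
have /orthomx_spectralP hH := Hn.
set W := spectralmx H in hH; set s := spectral_diag H in hH.
have hW : W *m ct W = 1%:M.
  by have /unitarymxP := spectral_unitarymx H; rewrite star_ct.
rewrite invmx_unitary ?spectral_unitarymx // star_ct in hH.
set U := ct W.
have hU1 : ct U *m U = 1%:M by rewrite /U ctK.
have hU2 : U *m ct U = 1%:M by apply: mulmx1C.
set Y := P *m U.
have hL : ct Y *m Y = diag_mx s.
  rewrite /Y ct_mul /U ctK -!mulmxA (mulmxA (ct P)) -/H hH.
  by rewrite !mulmxA hW mul1mx -mulmxA hW mulmx1.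
pose r i := vnorm (col i Y).
have hcolU : forall i, vnorm (col i U) = 1.
  move=> i; have := gram U i; rewrite hU1 mxE eqxx mulr1n => h.
  have h' : vnorm (col i U) ^+ 2 = 1 by apply: complexI; rewrite -h.
  by rewrite -[vnorm _]ger0_norm ?vnorm_ge0 // -sqrtr_sqr h' sqrtr1.
have hr : forall i, 1 - eps <= r i <= 1 + eps.
  move=> i; rewrite /r /Y colE -mulmxA -colE; have := hPlo (col i U); have := hPhi (col i U).
  rewrite hcolU !mulr1 => h1 h2; by rewrite h1 h2.
have rpos : forall i, 0 < r i by move=> i; have := hr i; lra.
have hs : diag_mx s = dR (fun i => r i ^+ 2).
  apply/matrixP => i j; rewrite /dR !mxE; case: (eqVneq i j) => [->|ne] //=.
  have := gram Y j; rewrite hL mxE eqxx /= mulr1n => ->; by rewrite mulr1n.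
rewrite hs in hL.
set Dinv := dR (fun i => (r i)^-1).
set Dr := dR r.
set Q := Y *m Dinv.
have hQ : ct Q *m Q = 1%:M.
  rewrite /Q ct_mul ct_dR -mulmxA (mulmxA (ct Y)) hL !dR_mul; apply: dR1 => i.
  have rn : r i != 0 := lt0r_neq0 (rpos i); rewrite /=; field; exact: rn.
have hQ2 : Q *m ct Q = 1%:M by apply: mulmx1C.
set V := Q *m ct U.
have hVu : ct V *m V = 1%:M.
  rewrite /V ct_mul ctK -mulmxA (mulmxA (ct Q)) hQ mul1mx; exact: hU2.
have hYQ : Y = Q *m Dr.
  rewrite /Q -mulmxA dR_mul dR1 ?mulmx1 // => i.
  have rn : r i != 0 := lt0r_neq0 (rpos i); rewrite /=; field; exact: rn.
have hPY : P = Y *m ct U by rewrite /Y -mulmxA hU2 mulmx1.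
exists V; split => //; last first.
  move=> x; have -> : (P - V) *m x = Q *m (dR (fun i => r i - 1) *m (ct U *m x)).
    by rewrite hPY hYQ /V -dR_sub1 !(mulmxBl, mulmxBr) mul1mx !mulmxA.
  rewrite (vnorm_iso Q) // -(vnorm_iso (ct U) x); last by rewrite ctK.
  apply: dR_bound => // i; have := hr i; nra.
set D := natdiag d.
have hPD : P *m D = D *m P by apply: comm_block.
have hPD' : ct P *m D = D *m ct P.
  apply: comm_block => i j ne; rewrite !mxE hPb ?conjc0 // eq_sym //.
have hHD : H *m D = D *m H by rewrite /H -mulmxA hPD mulmxA hPD' mulmxA.
set G := ct U *m D *m U.
have hLH : ct U *m H *m U = dR (fun i => r i ^+ 2).
  by rewrite -hL /Y ct_mul !mulmxA.
have hLG : dR (fun i => r i ^+ 2) *m G = G *m dR (fun i => r i ^+ 2).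
  by rewrite -hLH /G !conjmul // hHD.
have hDG : Dinv *m G = G *m Dinv.
  apply/matrixP => i j; have := congr1 (fun M : 'M[R[i]]_n => M i j) hLG => /=.
  have [e1' e2'] := dR_entry (fun i => r i ^+ 2) G i j.
  have [e3 e4] := dR_entry (fun i => (r i)^-1) G i j.
  rewrite e1' e2' /Dinv e3 e4 => h.
  have [Gz|Gnz] := eqVneq (G i j) 0; first by rewrite Gz mulr0 mul0r.
  have h2 : (r i ^+ 2)%:C = (r j ^+ 2)%:C :> R[i].
    by apply: (mulIf Gnz); rewrite h mulrC.
  move/complexI: h2 => h2.
  have -> : r i = r j.
    by rewrite -(ger0_norm (ltW (rpos i))) -(ger0_norm (ltW (rpos j))) -!sqrtr_sqr h2.
  by rewrite mulrC.
have hDe : D = U *m G *m ct U by rewrite /G !mulmxA hU2 mul1mx -mulmxA hU2 mulmx1.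
set S := U *m Dinv *m ct U.
have hSD : S *m D = D *m S.
  have e : forall A B, (U *m A *m ct U) *m (U *m B *m ct U) = U *m (A *m B) *m ct U.
    by move=> A B; have := @conjmul _ _ (ct U) A B; rewrite ctK; apply.
  clearbody G D; rewrite hDe /S e e hDG //.
have hVS : V = P *m S by rewrite /V /Q /Y /S !mulmxA.
by rewrite hVS -mulmxA hSD mulmxA hPD mulmxA.
Qed.

Local Close Scope complex_scope.

Lemma unitary1 {R : realType} {n : nat} : unitary (1%:M : 'M[R[i]]_n).
Proof. by rewrite /unitary adjmx_ct ct1 mul1mx. Qed.

Lemma delta_unit {R : realType} {n : nat} (j : 'I_n) : vnorm (delta_mx j 0 : 'cV[R[i]]_n) = 1.
Proof.
rewrite vnormE /sqv (bigD1 j) //= big1 ?addr0.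
  by rewrite !mxE !eqxx /cabs2 /=; rewrite expr0n /= addr0 expr1n sqrtr1.
by move=> k hk; rewrite !mxE (negbTE hk) /cabs2 /= expr0n /= addr0.
Qed.

Theorem mainTheorem5 (R : realType) (n : nat) (d : 'I_n -> nat)
    (hd : forall k : 'I_n, (0 < d k)%N)
    (O : 'M[R[i]]_n) (hO : unitary O) :
  exists V : 'M[R[i]]_n,
    [/\ unitary V, commutator V (natdiag d) = 0 &
        opnorm (O - V) <= (2 * n)%:R * opnorm (commutator O (natdiag d))].
Proof.
case: hO; rewrite adjmx_ct => hO1 hO2.
have com0 : forall V : 'M[R[i]]_n, V *m natdiag d = natdiag d *m V ->
    commutator V (natdiag d) = 0 by move=> V h; rewrite /commutator h subrr.
set D := natdiag d in com0 *; set C := commutator O D; set c := opnorm C.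
have [n0|npos] := posnP n.
  exists 1%:M; split; first exact: unitary1.
    by apply: com0; rewrite mul1mx mulmx1.
  apply: (@le_trans _ _ 0); last by rewrite n0 muln0 mul0r.
  apply: opnorm_le => // x; clear -n0; subst n.
  by rewrite mul0r vnormE /sqv big_ord0 sqrtr0.
pose P : 'M[R[i]]_n := \matrix_(i, j) (if d i == d j then O i j else 0).
have hPb : forall i j, d i != d j -> P i j = 0 by move=> i j h; rewrite mxE (negbTE h).
have hBcol : forall j, vnorm (col j (O - P)) <= c.
  move=> j; apply: (@le_trans _ _ (vnorm (col j C))); last first.
    by rewrite colE opnorm_ge // delta_unit.
  rewrite !vnormE ler_wsqrtr // /sqv; apply: ler_sum => i _.
  rewrite /C /commutator /D /natdiag mul_mx_diag mul_diag_mx !mxE.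
  have [e|e] := eqVneq (d i) (d j).
    by rewrite /= subrr /cabs2 /= expr0n /= addr0 e cabs2_ge0.
  rewrite /= subr0; apply: cabs2_sep; by rewrite eq_sym.
have hc0 : 0 <= c.
  have j : 'I_n := Ordinal npos.
  by apply: le_trans (hBcol j); exact: vnorm_ge0.
have hB : forall x, vnorm ((O - P) *m x) <= (n%:R * c) * vnorm x.
  move=> x; apply: (le_trans (vnorm_mul_le _ _)).
  apply: (@le_trans _ _ (\sum_(j < n) vnorm x * c)).
    apply: ler_sum => j _; apply: ler_pM => //; first exact: sqrtr_ge0.
      exact: vnorm_ge0.
    exact: coord_le.
  rewrite sumr_const card_ord.
  by have -> : n%:R * c * vnorm x = (vnorm x * c) *+ n by rewrite -mulr_natl; ring.
have h2 : (2 * n)%:R * c = 2 * (n%:R * c) by rewrite natrM mulrA.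
have [big|small] := lerP 1 (n%:R * c).
  exists 1%:M; split; first exact: unitary1.
    by apply: com0; rewrite mul1mx mulmx1.
  rewrite h2; apply: (@le_trans _ _ 2); last by lra.
  apply: opnorm_le => // x; rewrite mulmxBl mul1mx.
  apply: (le_trans (vnorm_sub _ _)); rewrite vnorm_iso //; lra.
have [V [hV1 hV2 hV3]] := @polar_case R n d O P (n%:R * c) hO2 (mulr_ge0 (ler0n _ _) hc0) small hB hPb.
exists V; split.
- by rewrite /unitary adjmx_ct hV1; split => //; apply: mulmx1C.
- exact: com0.
rewrite h2; apply: opnorm_le; first by rewrite mulr_ge0 // mulr_ge0.
move=> x; have -> : (O - V) *m x = (O - P) *m x + (P - V) *m x.
  by rewrite -mulmxDl addrA subrK.
apply: (le_trans (vnorm_add _ _)); have := hB x; have := hV3 x; lra.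
Qed.
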